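(* Let $h\in\mathbb R[x_1,\ldots,x_n]$ be homogeneous of degree $d$ with $h(e)\neq0$ for some $e\in\mathbb R^n$, and let $c_\alpha$, $H_\alpha$ and $\mathcal H_e(h)$ be as in the context. Assume there is a positive linear functional $\varphi\colon\mathbb C\langle z\rangle\to\mathbb C$ (i.e. $\varphi(p^*p)\ge0$ for all $p$) with $\varphi(H_\alpha)=c_\alpha$ for all $\alpha\in\mathbb N^n$ with $|\alpha|\le2(d-1)$. Then $\mathcal H_e(h)$ is a sum of hermitian squares of polynomial matrices, i.e. $\mathcal H_e(h)=\sum_i A_i^*A_i$ for finitely many matrices $A_i$ with entries in $\mathbb C[x_1,\ldots,x_n]$ (where $^*$ is conjugate transposition, coefficientwise conjugation, variables $x_j$ being fixed).
   Context: $h_{a,e}(t):=h(a-te)$. $\mathbb C\langle z\rangle=\mathbb C\langle z_1,\ldots,z_n\rangle$ is the free noncommutative unital algebra with involution determined by $z_i^*=z_i$. For a univariate polynomial $p$ of degree $d$ with complex roots $\lambda_1,\ldots,\lambda_d$, $N_k(p)=\sum_j\lambda_j^k$ is the $k$-th Newton sum. Write $N_k(h_{a,e}(t))=\sum_{|\alpha|=k}c_\alpha a^\alpha$ as a polynomial in $a\in\mathbb R^n$, defining $c_\alpha$. $H_\alpha\in\mathbb C\langle z\rangle$ is the sum of all words in $z_1,\dots,z_n$ containing each $z_i$ exactly $\alpha_i$ times. $\mathcal H_e(h)$ is the $d\times d$ Hermite matrix of $h(x-te)$ as a polynomial in $t$: $\mathcal H_e(h)=(N_{i+j}(h(x-te)))_{i,j=0,\ldots,d-1}$,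 whose entries are polynomials in $x$. *)

(* Defs.v *)
From HB Require Import structures.
From mathcomp Require Import all_boot all_order all_algebra.
From mathcomp Require Import reals.
From mathcomp.real_closed Require Import complex.
From mathcomp Require Import mpoly.

Set Implicit Arguments.
Unset Strict Implicit.
Unset Printing Implicit Defensive.

Import Order.TTheory GRing.Theory Num.Theory.
Local Open Scope ring_scope.

Notation Cx R := (complex R).

Definition cR (R : realType) (r : R) : Cx R := Complex r 0.

(* h_{a,e}(t) := h(a - t e), as a univariate polynomial in t over C.         *)
Definition h_ae (R : realType) (n : nat) (h : {mpoly R[n]})
  (a e : 'I_n -> R) : {poly Cx R} :=
  mmap (fun r : R => (cR r)%:P) (fun i => (cR (a i))%:P - cR (e i) *: 'X) h.

Definition is_root_list (C : idomainType) (p : {poly C}) (r : seq C) : Prop :=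
  p = lead_coef p *: \prod_(z <- r) ('X - z%:P).

Definition newton_sum_of (C : idomainType) (r : seq C) (k : nat) : C :=
  \sum_(z <- r) z ^+ k.

(* The free noncommutative *-algebra C<z_1..z_n> (z_i^* = z_i).
   An element is given as a finite list of terms (coefficient, word), a word
   being a sequence of letters in 'I_n; the element is the sum of the terms. *)
Definition ncpoly (n : nat) (C : Type) := seq (C * seq 'I_n).

Definition nc_star (R : realType) n (p : ncpoly n (Cx R)) : ncpoly n (Cx R) :=
  [seq ((t.1)^*%C, rev t.2) | t <- p].

Definition nc_mul (C : pzRingType) n (p q : ncpoly n C) : ncpoly n C :=
  [seq (s.1 * t.1, s.2 ++ t.2) | s <- p, t <- q].

(* A linear functional on C<z> is determined by its values L w on the basis of
   words; phi_L is its linear extension. *)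
Definition nc_apply (C : pzRingType) n (L : seq 'I_n -> C) (p : ncpoly n C) : C :=
  \sum_(t <- p) t.1 * L t.2.

Definition positive_functional (R : realType) n (L : seq 'I_n -> Cx R) : Prop :=
  forall p : ncpoly n (Cx R), 0 <= nc_apply L (nc_mul (nc_star p) p).

(* phi(H_alpha), H_alpha = sum of all words containing each z_i exactly
   alpha_i times (such words have length |alpha|). *)
Definition phi_H (C : pzRingType) n (L : seq 'I_n -> C) (alpha : 'X_{1..n}) : C :=
  \sum_(w : (mdeg alpha).-tuple 'I_n | [forall i, count_mem i w == alpha i])
     L (tval w).

Definition mx_adj (R : realType) n m k (A : 'M[{mpoly (Cx R)[n]}]_(m, k))
  : 'M[{mpoly (Cx R)[n]}]_(k, m) :=
  map_mx (map_mpoly (fun z : Cx R => z^*%C)) A^T.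

(* Main.v *)
Require Import Defs.
From HB Require Import structures.
From mathcomp Require Import all_boot all_order all_algebra.
From mathcomp Require Import reals.
From mathcomp.real_closed Require Import complex.
From mathcomp Require Import mpoly.
From mathcomp Require Import sesquilinear spectral.
From mathcomp Require Import ring zify.
Import Order.TTheory GRing.Theory Num.Theory Num.Def.
Local Open Scope ring_scope.
Set Implicit Arguments.
Unset Strict Implicit.
Unset Printing Implicit Defensive.
Section PSD.
Variable C : numClosedFieldType.
Local Open Scope sesquilinear_scope.

Lemma psd_factor N (M : 'M[C]_N) :
  M ^t conjC = M ->
  (forall c : 'I_N -> C, 0 <= \sum_p \sum_q (c p)^* * c q * M p q) ->
  exists B : 'M[C]_N, M = B ^t conjC *m B.
Proof.
move=> Mh Mpsd.
have Mn : M \is normalmx by apply/normalmxP; rewrite Mh.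
have := Mn => /orthomx_spectralP.
set P := spectralmx M; set D := spectral_diag M => ME.
have Pu : P \is unitarymx := spectral_unitarymx M.
have PiE : invmx P = P ^t conjC by rewrite invmx_unitary.
have Dge0 : forall k, 0 <= D 0 k.
  move=> k.
  have : (P *m M *m P ^t conjC) k k = D 0 k.
    rewrite ME PiE !mulmxA (unitarymxP Pu) mul1mx -mulmxA (unitarymxP Pu) mulmx1.
    by rewrite mxE eqxx mulr1n.
  move=> <-; rewrite mxE.
  rewrite (eq_bigr (fun j => \sum_i P k i * M i j * (P ^t conjC) j k)); last first.
    by move=> j _; rewrite mxE big_distrl /=; apply: eq_bigr => i _; rewrite mxE.
  rewrite exchange_big /=.
  have := Mpsd (fun q => (P k q)^*); congr (0 <= _).
  apply: eq_bigr => p _; apply: eq_bigr => q _.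
  by rewrite !mxE conjCK mulrAC.
exists (diag_mx (map_mx sqrtC D) *m P).
rewrite trmx_mul map_mxM tr_diag_mx map_diag_mx mulmxA -[X in X *m P]mulmxA.
rewrite mulmx_diag ME PiE; congr (_ *m diag_mx _ *m _).
apply/rowP => k; rewrite !mxE.
have := Dge0 k; move: (D 0 k) => x x0.
change (x = (sqrtC x)^* * sqrtC x).
have -> : (sqrtC x)^* = sqrtC x.
  by apply/CrealP; rewrite ger0_real // sqrtC_ge0.
by rewrite -expr2 sqrtCK.
Qed.
End PSD.
Section NC.
Variable R : realType.
Variable n : nat.
Variable L : seq 'I_n -> Cx R.
Hypothesis Lpos : positive_functional L.

Lemma nc_quad (I : finType) (w : I -> seq 'I_n) (c : I -> Cx R) :
  nc_apply L (nc_mul (nc_star [seq (c s, w s) | s <- enum I])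
                     [seq (c s, w s) | s <- enum I]) =
  \sum_s \sum_t (c s)^* * c t * L (rev (w s) ++ w t).
Proof.
rewrite /nc_apply /nc_mul /nc_star big_allpairs_dep /= -map_comp big_map.
rewrite big_enum /=; apply: eq_bigr => s _.
by rewrite big_map big_enum /=.
Qed.

Lemma nc_psd (I : finType) (w : I -> seq 'I_n) (c : I -> Cx R) :
  0 <= \sum_s \sum_t (c s)^* * c t * L (rev (w s) ++ w t).
Proof. by rewrite -nc_quad; apply: Lpos. Qed.

Lemma nc_herm (a b : seq 'I_n) : (L (rev a ++ b))^* = L (rev b ++ a).
Proof.
pose q (z : Cx R) : ncpoly n (Cx R) := [:: (1, a); (z, b)].
have qE z : nc_apply L (nc_mul (nc_star (q z)) (q z)) =
    L (rev a ++ a) + z * L (rev a ++ b) + z^* * L (rev b ++ a)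
    + z^* * z * L (rev b ++ b).
  rewrite /nc_apply /nc_mul /nc_star /= !big_cons big_nil /=.
  rewrite (_ : (1 -i* 0)%C = 1); last by apply/eqP; rewrite eq_complex /= oppr0 !eqxx.
  by rewrite !mul1r mulr1 addr0 !addrA.
have real1 (x : seq 'I_n) : L (rev x ++ x) \is Num.real.
  have := Lpos [:: (1, x)].
  rewrite /nc_apply /nc_mul /nc_star /= !big_cons big_nil /=.
  rewrite (_ : (1 -i* 0)%C = 1); last by apply/eqP; rewrite eq_complex /= oppr0 !eqxx.
  rewrite !mul1r addr0 => H.
  by apply: ger0_real.
have realq z : nc_apply L (nc_mul (nc_star (q z)) (q z)) \is Num.real.
  exact/ger0_real/Lpos.
set X := L (rev a ++ b); set Y := L (rev b ++ a).
have H1 : X + Y \is Num.real.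
  have := realq 1; rewrite qE conjC1 !mul1r.
  by rewrite -!addrA rpredDl ?real1 // addrA rpredDr ?real1.
have H2 : 'i * X - 'i * Y \is Num.real.
  have := realq 'i; rewrite qE conjCi.
  rewrite (mulNr 'i 'i) -expr2 sqrCi opprK mul1r.
  rewrite -!addrA rpredDl ?real1 // addrA rpredDr ?real1 //.
  by rewrite mulNr.
have /CrealP E1 := H1.
have /CrealP E2 := H2.
rewrite rmorphD /= in E1.
rewrite rmorphB !rmorphM /= conjCi !mulNr opprK in E2.
have : 2 * X^* = 2 * Y.
  apply/eqP; rewrite -subr_eq0.
  have -> : 2 * X^* - 2 * Y = (X^* + Y^* - (X + Y))
     + 'i * ((- ('i * X^*) + 'i * Y^*) - ('i * X - 'i * Y)).
    rewrite !(mulrDr, mulrN, mulrBr, mulrA) -expr2 sqrCi; ring.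
  by rewrite E1 E2 !subrr mulr0 addr0.
move/(mulfI _); apply; by rewrite pnatr_eq0.
Qed.
End NC.
Definition mon n (s : seq 'I_n) : 'X_{1..n} := [multinom count_mem i s | i < n].

Lemma mon_nil n : mon (@nil 'I_n) = 0%MM.
Proof. by apply/mnmP => i; rewrite mnmE. Qed.

Lemma mon_cat n (u v : seq 'I_n) : mon (u ++ v) = (mon u + mon v)%MM.
Proof. by apply/mnmP => i; rewrite mnmDE !mnmE count_cat. Qed.

Lemma mon_rev n (u : seq 'I_n) : mon (rev u) = mon u.
Proof. by apply/mnmP => i; rewrite !mnmE count_rev. Qed.

Lemma mon_cons n x (u : seq 'I_n) : mon (x :: u) = (U_(x) + mon u)%MM.
Proof. by rewrite -cat1s mon_cat; congr (_ + _)%MM; apply/mnmP => i; rewrite mnmE mnm1E /= addn0. Qed.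

Lemma mdeg_mon n (u : seq 'I_n) : mdeg (mon u) = size u.
Proof.
elim: u => [|x u IH]; first by rewrite mon_nil mdeg0.
by rewrite mon_cons mdegD mdeg1 IH.
Qed.

Section Tup.
Variable T : finType.
Variables i j : nat.

Lemma ttake_proof (w : (i + j).-tuple T) : size (take i w) == i.
Proof. by rewrite size_takel // size_tuple leq_addr. Qed.
Lemma tdrop_proof (w : (i + j).-tuple T) : size (drop i w) == j.
Proof. by rewrite size_drop size_tuple addKn. Qed.
Definition ttake (w : (i + j).-tuple T) : i.-tuple T := Tuple (ttake_proof w).
Definition tdrop (w : (i + j).-tuple T) : j.-tuple T := Tuple (tdrop_proof w).

Lemma sum_cat_tuple (V : nmodType) (F : seq T -> V) :
  \sum_(w : (i + j).-tuple T) F w =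
  \sum_(u : i.-tuple T) \sum_(v : j.-tuple T) F (u ++ v).
Proof.
rewrite pair_big /=.
rewrite (reindex (fun p : i.-tuple T * j.-tuple T => [tuple of p.1 ++ p.2])) /=.
  by apply: eq_bigr.
exists (fun w => (ttake w, tdrop w)).
  move=> [u v] _ /=; congr (_, _); apply: val_inj => /=.
    by rewrite take_size_cat // size_tuple.
  by rewrite drop_size_cat // size_tuple.
by move=> w _; apply: val_inj => /=; rewrite cat_take_drop.
Qed.
End Tup.

Lemma sum_rev_tuple (T : finType) k (V : nmodType) (F : seq T -> V) :
  \sum_(u : k.-tuple T) F (rev u) = \sum_(u : k.-tuple T) F u.
Proof.
rewrite (reindex_inj (h := fun u : k.-tuple T => [tuple of rev u])) /=.
  by apply: eq_bigr => u _; rewrite revK.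
by move=> u v /(congr1 val) /= /(congr1 rev); rewrite !revK => /val_inj.
Qed.
Lemma mx_adj_mul (R : realType) n a b c (X : 'M[{mpoly (Cx R)[n]}]_(a, b))
  (Y : 'M[{mpoly (Cx R)[n]}]_(b, c)) : mx_adj (X *m Y) = mx_adj Y *m mx_adj X.
Proof.
apply/matrixP => i j; rewrite !mxE.
rewrite (_ : map_mpoly (fun z : Cx R => z^*%C) = map_mpoly (@conjc R)) //.
rewrite rmorph_sum; apply: eq_bigr => k _.
by rewrite rmorphM /= !mxE mulrC.
Qed.

Local Open Scope sesquilinear_scope.
Lemma mx_adj_C (R : realType) n a b (X : 'M[Cx R]_(a, b)) :
  mx_adj (map_mx (@mpolyC n (Cx R)) X) = map_mx (@mpolyC n (Cx R)) (X ^t conjC).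
Proof. by apply/matrixP => i j; rewrite !mxE map_mpolyC. Qed.

Lemma sum_enum_val (T : finType) (A : {pred T}) (V : nmodType) (F : T -> V) :
  (forall x, x \in A) -> \sum_(s < #|A|) F (enum_val s) = \sum_t F t.
Proof.
move=> AT; symmetry; rewrite (reindex (@enum_val T A)) //.
exists (fun t => enum_rank_in (AT t) t) => [s _|t _].
  by apply: enum_valK_in.
by apply: enum_rankK_in.
Qed.

Lemma sum_sig (I : finType) (J : I -> finType) (V : nmodType)
  (F : {i : I & J i} -> V) :
  \sum_p F p = \sum_i \sum_(u : J i) F (Tagged J u).
Proof.
rewrite (sig_big_dep xpredT (fun _ _ => true) (fun i u => F (Tagged J u))) /=.
by apply: eq_bigr => -[i u].
Qed.

Section Gram.
Local Open Scope sesquilinear_scope.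
Variable R : realType.
Variables n d : nat.
Variable L : seq 'I_n -> Cx R.
Hypothesis Lpos : positive_functional L.
Local Notation W := {j : 'I_d & j.-tuple 'I_n}.
Definition word (p : W) : seq 'I_n := tagged p.
Local Notation N := #|{: W}|.

Definition Gm : 'M[Cx R]_N :=
  \matrix_(s, t) L (rev (word (enum_val s)) ++ word (enum_val t)).

Lemma Gm_herm : Gm ^t conjC = Gm.
Proof. by apply/matrixP => s t; rewrite !mxE nc_herm. Qed.

Lemma Gm_psd (c : 'I_N -> Cx R) :
  0 <= \sum_p \sum_q (c p)^* * c q * Gm p q.
Proof.
have := nc_psd Lpos (fun s : 'I_N => word (enum_val s)) c; congr (0 <= _).
by apply: eq_bigr => p _; apply: eq_bigr => q _; rewrite mxE.
Qed.

Definition Vm : 'M[{mpoly (Cx R)[n]}]_(N, d) :=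
  \matrix_(s, j) if tag (enum_val s) == j then 'X_[mon (word (enum_val s))] else 0.

Lemma gram : exists A : 'M[{mpoly (Cx R)[n]}]_(N, d), forall i j : 'I_d,
  (mx_adj A *m A) i j = \sum_(u : i.-tuple 'I_n) \sum_(v : j.-tuple 'I_n)
      L (rev u ++ v) *: 'X_[(mon u + mon v)%MM].
Proof.
have [B GB] := psd_factor Gm_herm Gm_psd.
exists (map_mx (@mpolyC n (Cx R)) B *m Vm) => i j.
rewrite mx_adj_mul mx_adj_C mulmxA -[X in X *m Vm]mulmxA -map_mxM -GB.
rewrite !mxE.
pose G (p q : W) : {mpoly (Cx R)[n]} :=
  (if tag p == i then 'X_[mon (word p)] else 0) *
  (L (rev (word p) ++ word q))%:MP *
  (if tag q == j then 'X_[mon (word q)] else 0).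
transitivity (\sum_(t < N) \sum_(s < N) G (enum_val s) (enum_val t)).
  apply: eq_bigr => t _; rewrite mxE big_distrl /=; apply: eq_bigr => s _.
  rewrite !mxE /G; congr (_ * _ * _).
  case: ifP => _; last by rewrite rmorph0.
  by rewrite (_ : map_mpoly (fun z : Cx R => z^*%C) = map_mpoly (@conjc R)) // map_mpolyX.
rewrite (@sum_enum_val _ _ _ (fun q => \sum_(s < N) G (enum_val s) q)) //.
under eq_bigr do rewrite (@sum_enum_val _ _ _ (fun p => G p _)) //.
rewrite exchange_big /= sum_sig (bigD1 i) //= [X in _ + X]big1 ?addr0; last first.
  move=> l /negbTE nl; apply: big1 => u _; apply: big1 => q _.
  by rewrite /G /= nl !mul0r.
apply: eq_bigr => u _.
rewrite sum_sig (bigD1 j) //= [X in _ + X]big1 ?addr0; last first.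
  move=> l /negbTE nl; apply: big1 => v _.
  by rewrite /G /= nl !mulr0.
apply: eq_bigr => v _.
by rewrite /G /= !eqxx /word /= mpolyXD -mul_mpolyC mulrCA mulrA.
Qed.
End Gram.
Section Scale.
Variable R : realType.
Variable n : nat.

Lemma cRM (x y : R) : cR (x * y) = cR x * cR y.
Proof. by rewrite /cR; apply/eqP; rewrite eq_complex /= !mulr0 !mul0r subr0 addr0 !eqxx. Qed.

Lemma cR_inj : injective (@cR R).
Proof. by move=> x y []. Qed.

Lemma cRX (x : R) k : cR (x ^+ k) = cR x ^+ k.
Proof.
elim: k => [|k IH]; first by rewrite !expr0.
by rewrite !exprS cRM IH.
Qed.

Lemma cR_neq0 (x : R) : x != 0 -> cR x != 0.
Proof. by apply: contra => /eqP [] ->. Qed.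

Lemma root_list_of (C : idomainType) (q : {poly C}) (c : C) (s : seq C) :
  q = c *: \prod_(z <- s) ('X - z%:P) -> is_root_list q s.
Proof.
move=> qE; rewrite /is_root_list {2}qE lead_coefZ.
by rewrite (monicP (monic_prod_XsubC _ _ _)) mulr1.
Qed.

Lemma h_ae_scale (h : {mpoly R[n]}) d (a e : 'I_n -> R) (lam : R) :
  h \is d.-homog -> lam != 0 ->
  h_ae h (fun i => lam * a i) e =
  (cR lam) ^+ d *: (h_ae h a e \Po ((cR lam)^-1 *: 'X)).
Proof.
move=> hh lam0.
set q := (cR lam)^-1 *: 'X.
have l0 : cR lam != 0 by apply: cR_neq0.
rewrite /h_ae /mmap.
rewrite (raddf_sum (comp_poly q)) scaler_sumr /=.
rewrite !big_seq; apply: eq_bigr => m mh.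
rewrite comp_polyM comp_polyC scalerAr; congr (_ * _).
rewrite /mmap1 (rmorph_prod (comp_poly q)) /=.
have gE i : (cR (lam * a i))%:P - cR (e i) *: 'X =
   cR lam *: (((cR (a i))%:P - cR (e i) *: 'X) \Po q).
  rewrite comp_polyB comp_polyC comp_polyZ comp_polyX /q.
  rewrite scalerBr !scalerA [cR lam * cR (e i)]mulrC -mulrA mulfV // mulr1.
  by rewrite cRM polyCM mul_polyC.
under eq_bigr do rewrite gE exprZn.
rewrite scaler_prod; congr (_ *: _); last first.
  by apply: eq_bigr => i _; rewrite rmorphXn.
rewrite prodrXr; congr (_ ^+ _).
by rewrite -mdegE (dhomog_mf hh).
Qed.


Lemma newton_scale (c : Cx R) r k :
  newton_sum_of [seq c * z | z <- r] k = c ^+ k * newton_sum_of r k.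
Proof.
by rewrite /newton_sum_of big_map mulr_sumr; apply: eq_bigr => z _; rewrite exprMn.
Qed.

Lemma P_scale (h : {mpoly R[n]}) d (e : 'I_n -> R) (P : nat -> {mpoly R[n]}) :
  h \is d.-homog ->
  (forall (k : nat) (a : 'I_n -> R) (r : seq (Cx R)),
      is_root_list (h_ae h a e) r ->
      cR (P k).@[a] = newton_sum_of r k) ->
  forall k (a : 'I_n -> R) (lam : R), lam != 0 ->
  (P k).@[fun i => lam * a i] = lam ^+ k * (P k).@[a].
Proof.
move=> hh Hroot k a lam l0.
have [r rE] := closed_field_poly_normal (h_ae h a e).
have H1 := Hroot k a r rE.
set c := cR lam.
have c0 : c != 0 by apply: cR_neq0.
have H2 : is_root_list (h_ae h (fun i => lam * a i) e) [seq c * z | z <- r].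
  apply: (@root_list_of _ _ (c ^+ d * (lead_coef (h_ae h a e) * \prod_(z <- r) c^-1))).
  rewrite (h_ae_scale _ _ hh l0) -/c {1}rE comp_polyZ scalerA.
  rewrite [in RHS]mulrA -[RHS]scalerA; congr (_ *: _).
  rewrite (rmorph_prod (comp_poly (c^-1 *: 'X))) /=.
  rewrite big_map -scaler_prod; apply: eq_bigr => z _.
  rewrite comp_polyB comp_polyC comp_polyX scalerBr scale_polyC mulrA mulVf // mul1r.
  done.
have := Hroot k _ _ H2; rewrite newton_scale -H1 -cRX -cRM.
exact: cR_inj.
Qed.

End Scale.
Lemma poly_vanish (R : realType) (p : {poly R}) :
  (forall t, t != 0 -> p.[t] = 0) -> p = 0.
Proof.
move=> H; apply/eqP; apply/negPn/negP => p0.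
set rs := [seq (i.+1)%:R | i <- iota 0 (size p)] : seq R.
have A : all (root p) rs.
  by apply/allP => _ /mapP [i _ ->]; apply/eqP/H; rewrite pnatr_eq0.
have U : uniq rs.
  rewrite map_inj_uniq ?iota_uniq // => i j /eqP; rewrite eqr_nat => /eqP [].
  done.
by have := max_poly_roots p0 A U; rewrite size_map size_iota ltnn.
Qed.

Lemma digits_inj (B : nat) n (f g : 'I_n -> nat) :
  (forall i, (f i < B)%N) -> (forall i, (g i < B)%N) ->
  (\sum_i f i * B ^ i = \sum_i g i * B ^ i)%N -> f =1 g.
Proof.
elim: n f g => [|n IH] f g fB gB.
  by move=> _ [].
rewrite !big_ord_recl /= !expn0 !muln1.
have sh (h : 'I_n.+1 -> nat) : (\sum_(i < n) h (lift ord0 i) * B ^ bump 0 i =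
    B * \sum_(i < n) h (lift ord0 i) * B ^ i)%N.
  rewrite big_distrr /=; apply: eq_bigr => i _.
  by rewrite /bump /= add1n expnS mulnCA.
rewrite !sh [(B * _)%N]mulnC [(B * (\sum_(i < n) g _ * _))%N]mulnC addnC [(g ord0 + _)%N]addnC => E.
have B0 : (0 < B)%N by have := fB ord0; case: (B).
have E0 : f ord0 = g ord0.
  have := congr1 (modn^~ B) E.
  by rewrite !modnMDl !modn_small.
have E1 := congr1 (divn^~ B) E; rewrite /= !divnMDl // !divn_small // !addn0 in E1.
have := IH (fun i => f (lift ord0 i)) (fun i => g (lift ord0 i)) (fun i => fB _) (fun i => gB _) E1.
move=> Ef i; case: (unliftP ord0 i) => [j ->|->] //.
Qed.

Lemma mpoly_vanish (R : realType) n (Q : {mpoly R[n]}) :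
  (forall v, Q.@[v] = 0) -> Q = 0.
Proof.
move=> H.
set B := msize Q.
pose e (m : 'X_{1..n}) := (\sum_i m i * B ^ i)%N.
pose u : {poly R} := \sum_(m <- msupp Q) Q@_m *: 'X^(e m).
have uE t : u.[t] = Q.@[fun i => t ^+ (B ^ i)].
  rewrite mevalE /u horner_sum; apply: eq_bigr => m _.
  rewrite hornerZ hornerXn; congr (_ * _).
  rewrite /e -prodrXr; apply: eq_bigr => i _.
  by rewrite -exprM mulnC.
have u0 : u = 0 by apply: poly_vanish => t _; rewrite uE H.
have Bm m : m \in msupp Q -> forall i, (m i < B)%N.
  move=> mQ i; apply: leq_ltn_trans (msize_mdeg_lt mQ).
  by rewrite mdegE (bigD1 i) //= leq_addr.
apply/mpolyP => a; rewrite mcoeff0.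
case: (boolP (a \in msupp Q)) => [aQ|]; last by move/memN_msupp_eq0.
have := congr1 (fun p : {poly R} => p`_(e a)) u0.
rewrite /= coef0 /u coef_sum (bigD1_seq a) ?msupp_uniq //= big1_seq.
  by rewrite coefZ coefXn eqxx mulr1 addr0.
move=> m /andP [ma mQ]; rewrite coefZ coefXn.
case: eqP; rewrite ?mulr0 // => E.
have := digits_inj (Bm _ mQ) (Bm _ aQ) (esym E).
by move/mnmP => ema; rewrite ema eqxx in ma.
Qed.

Lemma homog_from_scale (R : realType) n (Q : {mpoly R[n]}) k :
  (forall a lam, lam != 0 -> Q.@[fun i => lam * a i] = lam ^+ k * Q.@[a]) ->
  forall al : 'X_{1..n}, mdeg al != k -> Q@_al = 0.
Proof.
move=> HS al nk.
have Qa : Q@_al = (pihomog mdeg (mdeg al) Q)@_al.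
  have lt : (mdeg al < (msize Q + mdeg al).+1)%N by rewrite ltnS leq_addl.
  rewrite {1}(@pihomog_partitionE _ _ mdeg (msize Q + mdeg al).+1 Q); last first.
    by rewrite ltnW // ltnS leq_addr.
  rewrite raddf_sum (bigD1 (Ordinal lt)) //= big1 ?addr0 // => j nj.
  apply: dhomog_nemf_coeff; first exact: pihomogP.
  by apply: contra nj => /eqP E; apply/eqP/val_inj; exact: esym E.
rewrite Qa (_ : pihomog _ _ _ = 0) ?mcoeff0 //.
apply: mpoly_vanish => a.
set j := mdeg al.
pose u : {poly R} := \sum_(m <- msupp Q) (Q@_m * \prod_i a i ^+ m i) *: 'X^(mdeg m).
have uE lam : u.[lam] = Q.@[fun i => lam * a i].
  rewrite mevalE /u horner_sum; apply: eq_bigr => m _.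
  rewrite hornerZ hornerXn -mulrA; congr (_ * _).
  rewrite mdegE -prodrXr -big_split /=; apply: eq_bigr => i _.
  by rewrite exprMn mulrC.
have v0 : u - Q.@[a] *: 'X^k = 0.
  apply: poly_vanish => lam l0.
  by rewrite hornerD hornerN hornerZ hornerXn uE HS // mulrC subrr.
have := congr1 (fun p : {poly R} => p`_j) v0.
rewrite /= coef0 coefB coefZ coefXn (negbTE nk) mulr0 subr0 /u coef_sum => <-.
rewrite pihomogE raddf_sum big_mkcond /=; apply: eq_bigr => m _.
rewrite coefZ coefXn eq_sym; case: eqP => _; last by rewrite mulr0.
by rewrite mulr1 mevalZ mevalX.
Qed.
Lemma poly_entry (R : realType) n (L : seq 'I_n -> Cx R) (i j : nat) :
  \sum_(u : i.-tuple 'I_n) \sum_(v : j.-tuple 'I_n)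
      L (rev u ++ v) *: 'X_[(mon u + mon v)%MM] =
  \sum_(w : (i + j).-tuple 'I_n) L w *: 'X_[mon w].
Proof.
rewrite (@sum_cat_tuple _ i j _ (fun s => L s *: 'X_[mon s])) /=.
transitivity (\sum_(u : i.-tuple 'I_n) (fun s => \sum_(v : j.-tuple 'I_n)
      L (s ++ v) *: 'X_[mon (s ++ v)]) (rev u)).
  by apply: eq_bigr => u _; apply: eq_bigr => v _; rewrite mon_cat mon_rev.
by rewrite (@sum_rev_tuple _ i _ (fun s => \sum_(v : j.-tuple 'I_n) L (s ++ v) *: 'X_[mon (s ++ v)])).
Qed.

Lemma phi_H_cast (C : pzRingType) n (L : seq 'I_n -> C) (a : 'X_{1..n}) k :
  mdeg a = k ->
  phi_H L a = \sum_(w : k.-tuple 'I_n | mon w == a) L w.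
Proof.
move=> E; subst k; rewrite /phi_H.
apply: eq_bigl => w; apply/forallP/eqP => [H|Ha i].
  by apply/mnmP => i; rewrite mnmE; apply/eqP.
by have := congr1 (fun m : 'X_{1..n} => m i) Ha; rewrite /= mnmE => ->.
Qed.

Lemma coef_entry (R : realType) n (L : seq 'I_n -> Cx R) k (a : 'X_{1..n}) :
  (\sum_(w : k.-tuple 'I_n) L w *: 'X_[mon w])@_a =
  if mdeg a == k then phi_H L a else 0.
Proof.
rewrite raddf_sum /=.
under eq_bigr do rewrite mcoeffZ mcoeffX.
case: eqP => [E|NE].
  rewrite (phi_H_cast L E).
  by rewrite [RHS]big_mkcond; apply: eq_bigr => w _; case: eqP; rewrite ?mulr1 ?mulr0.
apply: big1 => w _; case: eqP => [E|]; last by rewrite mulr0.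
by case: NE; rewrite -E mdeg_mon size_tuple.
Qed.

Unset Implicit Arguments.
Set Strict Implicit.
Theorem proposition4p2 (R : realType) (n d : nat) (h : {mpoly R[n]})
  (e : 'I_n -> R)
  (P : nat -> {mpoly R[n]})
  (L : seq 'I_n -> Cx R) :
  h \is d.-homog ->
  h.@[e] != 0 ->
  (forall (k : nat) (a : 'I_n -> R) (r : seq (Cx R)),
      is_root_list (h_ae h a e) r ->
      cR (P k).@[a] = newton_sum_of r k) ->
  positive_functional L ->
  (forall alpha : 'X_{1..n}, (mdeg alpha <= 2 * (d - 1))%N ->
      phi_H L alpha = cR (P (mdeg alpha))@_alpha) ->
  let Herm : 'M[{mpoly (Cx R)[n]}]_d :=
    \matrix_(i < d, j < d) map_mpoly (@cR R) (P (i + j)%N) in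
  exists (k m : nat) (A : 'I_k -> 'M[{mpoly (Cx R)[n]}]_(m, d)),
    Herm = \sum_(i < k) mx_adj (A i) *m A i.
Proof.
move=> hh he Hroot Lpos Hphi Herm.
have HOM : forall k a, mdeg a != k -> (P k)@_a = 0.
  by move=> k; apply: homog_from_scale => a lam l0; apply: (P_scale hh Hroot).
have [A HA] := gram d Lpos.
exists 1%N, _, (fun _ => A); rewrite big_ord1.
apply/matrixP => i j; rewrite HA mxE poly_entry.
apply/mpolyP => a.
rewrite coef_entry.
rewrite (_ : map_mpoly (@cR R) = map_mpoly (real_complex R)) //.
rewrite mcoeff_map_mpoly.
case: eqP => [E|NE]; last by rewrite HOM ?raddf0 //; apply/eqP.
rewrite Hphi ?E //.
by have := ltn_ord i; have := ltn_ord j; lia.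
Qed.
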